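(* Let $\alpha_1,\dots,\alpha_n\in\mathbb{Z}^{n-1}$ be weights of a representation of $T^{n-1}$ on $\mathbb{C}^n$ in general position (every $n-1$ of them linearly independent). For $i=1,\dots,n$ let $\tilde c_i=(-1)^i\det(\alpha_1,\dots,\widehat{\alpha_i},\dots,\alpha_n)\in\mathbb{Z}$ (nonzero), $c_{\gcd}=\gcd(\tilde c_1,\dots,\tilde c_n)$ and $c_i=\tilde c_i/c_{\gcd}$. Let $G=T^n$ act on $\mathbb{C}^n$ by $(t_1,\dots,t_n)\cdot(z_1,\dots,z_n)=(t_1z_1,\dots,t_nz_n)$ and let $T'=\{t\in G\mid t_1^{c_1}\cdots t_n^{c_n}=1\}$ act by restriction. Then this action of $T'$ on $\mathbb{C}^n$ is strictly appropriate (all its stabilizer subgroups are connected) if and only if $c_i=\pm1$ for all $i$, i.e. if and only if all $\tilde c_i$ coincide up to sign.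
   Context: The orbit space of the original representation coincides with that of $T'$ acting on $\mathbb{C}^n$. For this linear action the fixed point set is the origin and the adjoining condition holds, so ''strictly appropriate'' amounts to the requirement that every stabilizer subgroup of $T'$ be a torus (have no finite components). *)

(* Defs.v *)
From HB Require Import structures.
From mathcomp Require Import all_boot all_order all_algebra.
From mathcomp Require Import all_classical all_reals all_analysis.
From mathcomp.real_closed Require Import complex.
Set Implicit Arguments. Unset Strict Implicit. Unset Printing Implicit Defensive.
Import Order.TTheory GRing.Theory Num.Theory.
Import numFieldNormedType.Exports.
Local Open Scope ring_scope.
Local Open Scope classical_set_scope.

(* n = m.+1 ; the weights alpha_1..alpha_n in Z^(n-1) are the rows of
   A : 'M[int]_(m.+1, m).  Ordinals are 0-based, so the paper's index i
   corresponds to the ordinal i-1, hence the sign (-1)^(i.+1). *)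
Definition ctilde (m : nat) (A : 'M[int]_(m.+1, m)) (i : 'I_m.+1) : int :=
  (-1) ^+ i.+1 * \det (row' i A).

Definition cgcd (m : nat) (A : 'M[int]_(m.+1, m)) : int :=
  Posz (\big[gcdn/0%N]_(i < m.+1) `|ctilde A i|%N).

Definition cvec (m : nat) (A : 'M[int]_(m.+1, m)) (i : 'I_m.+1) : int :=
  (ctilde A i %/ cgcd A)%Z.

Definition torus (R : realType) (n : nat) : set 'rV[R[i]^o]_n :=
  [set t | forall j, `|t ord0 j| = 1].

Definition Tprime (R : realType) (m : nat) (A : 'M[int]_(m.+1, m))
  : set 'rV[R[i]^o]_m.+1 :=
  [set t | torus t /\ \prod_(j < m.+1) (t ord0 j) ^ (cvec A j) = 1].

Definition stabilizer (R : realType) (m : nat) (A : 'M[int]_(m.+1, m))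
  (z : 'rV[R[i]^o]_m.+1) : set 'rV[R[i]^o]_m.+1 :=
  [set t | Tprime A t /\ forall j, t ord0 j * z ord0 j = z ord0 j].

Definition strictly_appropriate (R : realType) (m : nat)
  (A : 'M[int]_(m.+1, m)) : Prop :=
  forall z : 'rV[R[i]^o]_m.+1, connected (stabilizer A z).

(* Main.v *)
Require Import Defs.
From HB Require Import structures.
From mathcomp Require Import all_boot all_order all_algebra.
From mathcomp Require Import all_classical all_reals all_analysis.
From mathcomp.real_closed Require Import complex.
Import Order.TTheory GRing.Theory Num.Theory.
Import numFieldNormedType.Exports.
Local Open Scope ring_scope.
From mathcomp Require Import ring lra.
Local Open Scope ring_scope.

Section Alg.
Variables (m : nat) (A : 'M[int]_(m.+1, m)).
Hypothesis Hgen : forall i : 'I_m.+1,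
      row_free (map_mx (intr : int -> rat) (row' i A)).

Lemma ctilde_neq0 i : ctilde A i != 0.
Proof.
rewrite /ctilde mulf_eq0 negb_or signr_eq0 /=.
have := Hgen i; rewrite row_free_unit unitmxE det_map_mx unitfE.
by rewrite intr_eq0.
Qed.

Definition gN := (\big[gcdn/0]_(i < m.+1) `|ctilde A i|%N)%N.

Lemma gN_dvd i : (gN %| `|ctilde A i|)%N.
Proof. exact: (biggcdn_inf i). Qed.

Lemma gN_gt0 : (0 < gN)%N.
Proof.
rewrite lt0n; apply/negP => /eqP h.
have := gN_dvd ord0; rewrite h dvd0n absz_eq0.
by rewrite (negbTE (ctilde_neq0 ord0)).
Qed.

Lemma ctildeE i : ctilde A i = cvec A i * (gN%:Z).
Proof.
rewrite /cvec /cgcd -/gN divzK //.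
exact: (gN_dvd i).
Qed.

Lemma norm_ctilde i : `|ctilde A i| = `|cvec A i| * gN%:Z.
Proof. by rewrite ctildeE normrM. Qed.

Lemma cvec_neq0 i : cvec A i != 0.
Proof.
by apply/negP => /eqP h; have := ctilde_neq0 i; rewrite ctildeE h mul0r eqxx.
Qed.

Lemma pm1_iff : (forall i, cvec A i = 1 \/ cvec A i = -1) <->
  (forall i j, `|ctilde A i| = `|ctilde A j|).
Proof.
have g0 : (gN%:Z != 0).
  by apply/negP => /eqP [] h; have := gN_gt0; rewrite h.
split.
  move=> H i j; rewrite !norm_ctilde.
  by case: (H i) => ->; case: (H j) => ->.
move=> H.
have hg : forall i, `|ctilde A i| = gN%:Z.
  move=> i; apply/eqP; rewrite eq_le; apply/andP; split.
    have : (`|ctilde A i| %| gN)%N.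
      apply/dvdn_biggcdP => j _; rewrite -[`|ctilde A j|%N]/(`|ctilde A j|%N).
      by have := H i j; rewrite -!abszE => -[] ->.
    move/dvdn_leq => /(_ gN_gt0).
    by rewrite -lez_nat abszE.
  rewrite -abszE lez_nat; apply: dvdn_leq; last exact: gN_dvd.
  by rewrite absz_gt0 ctilde_neq0.
move=> i; have := hg i; rewrite norm_ctilde.
move=> /eqP; rewrite -{2}[gN%:Z]mul1r (inj_eq (mulIf g0)) eqr_norml.
by case/andP => /orP[] /eqP ->; [left|right].
Qed.
End Alg.

Section Top.
Local Open Scope classical_set_scope.
Local Open Scope complex_scope.
Lemma continuous_rowfun (T : topologicalType) (K : numFieldType) n
  (f : T -> 'I_n -> K) : (forall j, continuous (fun x => f x j)) ->
  continuous (fun x => \row_j f x j : 'rV[K]_n).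
Proof.
move=> fc x; apply/cvg_ballP => e e0.
have : \forall y \near x, forall j, ball (f x j) e (f y j).
  apply: filter_forall => j; by move: (fc j x) => /cvg_ballP; apply.
apply: filterS => y H; split => // i j; rewrite !mxE; exact: H.
Qed.
Variable R : realType.
Lemma normC_real (r : R) : `|(r%:C : R[i])| = `|r|%:C.
Proof. by rewrite normc_def /= expr0n /= addr0 sqrtr_sqr. Qed.

Lemma rc_continuous : continuous (fun r : R => (r%:C : R[i]^o)).
Proof.
move=> x; apply/cvg_ballP => -[a b] e0.
move: e0; rewrite ltcE /= => /andP[/eqP b0 a0]; subst b.
have : \forall y \near x, ball x a y.
  by move: (@cvg_id _ (nbhs x)) => /cvg_ballP; apply.
apply: filterS => y; rewrite /ball /= => H.
have -> : (x%:C - y%:C : R[i]) = (x - y)%:C by apply/eqP; rewrite eq_complex /= oppr0 addr0 !eqxx.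
by rewrite normC_real complexr0 ltcR.
Qed.
Definition expi (x : R) : R[i]^o := (cos x +i* sin x).

Lemma expiE x : expi x = (cos x)%:C + 'i * (sin x)%:C.
Proof. by apply/eqP; rewrite eq_complex /= !(mul0r, mul1r, subr0, addr0, add0r) !eqxx. Qed.

Lemma expi_continuous : continuous expi.
Proof.
have -> : expi = (fun x => (cos x)%:C + 'i * (sin x)%:C).
  by apply/funext => x; rewrite expiE.
move=> x; apply: cvgD.
  exact: (continuous_comp (@continuous_cos R x) (rc_continuous _)).
apply: cvgM; first exact: cvg_cst.
exact: (continuous_comp (@continuous_sin R x) (rc_continuous _)).
Qed.

Lemma expiD x y : expi (x + y) = expi x * expi y.
Proof. by apply/eqP; rewrite eq_complex /= cosD sinD !eqxx /= addrC eqxx. Qed.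

Lemma expi0 : expi 0 = 1.
Proof. by apply/eqP; rewrite eq_complex /= cos0 sin0 !eqxx. Qed.

Lemma norm_expi x : `|expi x| = 1.
Proof. by rewrite normc_def /= cos2Dsin2 sqrtr1. Qed.

Lemma expiN x : expi (- x) = (expi x)^-1.
Proof.
apply: (@mulIf _ (expi x)).
  by apply/eqP => h; move: (norm_expi x); rewrite h normr0 => /eqP; rewrite eq_sym oner_eq0.
rewrite -expiD addNr expi0 mulVf //.
by apply/eqP => h; move: (norm_expi x); rewrite h normr0 => /eqP; rewrite eq_sym oner_eq0.
Qed.

Lemma expiMn x (k : nat) : expi x ^+ k = expi (x *+ k).
Proof. elim: k => [|k IH]; first by rewrite expr0 mulr0n expi0.
by rewrite exprS IH mulrS expiD. Qed.

Lemma expiz x (c : int) : expi x ^ c = expi (c%:~R * x).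
Proof.
case: c => k.
  by rewrite -exprnP expiMn mulrC mulr_natr.
rewrite NegzE -invr_expz -exprnP expiMn -expiN; congr expi.
by rewrite mulrNz mulNr -pmulrn mulr_natl.
Qed.

Lemma expi_sum (I : Type) (r : seq I) (P : pred I) (f : I -> R) :
  \prod_(j <- r | P j) expi (f j) = expi (\sum_(j <- r | P j) f j).
Proof.
elim/big_rec2: _ => [|j y1 y2 _ ->]; first by rewrite expi0.
by rewrite expiD.
Qed.

Definition carg (t : R[i]) : R :=
  let: a +i* b := t in if 0 <= b then acos a else - acos a.

Lemma carg1 : carg 1 = 0.
Proof. by rewrite /carg /= lexx acos1. Qed.

Lemma expi_carg t : `|t| = 1 -> expi (carg t) = t.
Proof.
case: t => a b; rewrite normc_def /= => h.
have h1 : a ^+ 2 + b ^+ 2 = 1.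
  have : Num.sqrt (a ^+ 2 + b ^+ 2) = 1 by case: h.
  move=> /(congr1 (fun x => x ^+ 2)); rewrite sqr_sqrtr ?expr1n //.
  by rewrite addr_ge0 ?sqr_ge0.
have ha : -1 <= a <= 1 by apply/andP; split; nra.
have hs : Num.sqrt (1 - a ^+ 2) = `|b|.
  by rewrite -h1 addrC addKr sqrtr_sqr.
rewrite /carg /=; case: ifP => hb; apply/eqP; rewrite eq_complex /=.
  by rewrite acosK ?inE // sin_acos // hs ger0_norm // !eqxx.
rewrite cosN sinN acosK ?inE // sin_acos // hs ltr0_norm ?opprK ?eqxx //.
by rewrite ltNge hb.
Qed.

Lemma connected_star (T : topologicalType) (S : set T) (x0 : T) :
  (forall t, S t -> exists P : set T, [/\ connected P, P `<=` S, P x0 & P t]) ->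
  connected S.
Proof.
move=> H.
have -> : S = \bigcup_(P in [set P : set T | [/\ connected P, P `<=` S & P x0]]) P.
  apply/seteqP; split => [t St | t [P [_ PS _] Pt]]; last exact: PS.
  by have [P [cP PS P0 Pt]] := H t St; exists P.
apply: bigcup_connected; first by exists x0 => P [].
by move=> P [].
Qed.

Lemma expi_neq0 x : expi x != 0.
Proof.
by apply/eqP => h; move: (norm_expi x); rewrite h normr0 => /eqP; rewrite eq_sym oner_eq0.
Qed.

Lemma sa_of_pm1 m (A : 'M[int]_(m.+1, m)) :
  (forall j, cvec A j = 1 \/ cvec A j = -1) -> strictly_appropriate R A.
Proof.
move=> hc0 z; set c := cvec A.
have hc : forall j, c j = 1 \/ c j = -1 := hc0.
pose one : 'rV[R[i]^o]_m.+1 := const_mx 1.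
apply: (@connected_star _ _ one) => t [[tor prod] hfix].
case: (pickP (fun j => z ord0 j == 0)) => [k zk | nz]; last first.
  have tone : t = one.
    apply/matrixP => a j; rewrite ord1 mxE.
    have zj : z ord0 j != 0 by rewrite nz.
    by apply: (mulIf zj); rewrite mul1r hfix.
  exists [set t]; split => //; first exact: connected1.
  by move=> x ->; split.
pose th j := carg (t ord0 j).
pose Sg := \sum_(j | j != k) (c j)%:~R * th j.
pose phi j := if j == k then - (c k)%:~R * Sg else th j.
pose gam (s : R) : 'rV[R[i]^o]_m.+1 := \row_j expi (s * phi j).
have ck2 : (c k)%:~R ^+ 2 = 1 :> R.
  case: (hc k) => ->; first exact: expr1n.
  by rewrite (_ : (-1)%:~R = -1 :> R) // sqrrN expr1n.
have gamS : forall s, stabilizer A z (gam s).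
  move=> s; split; [split|].
  - by move=> j; rewrite mxE norm_expi.
  - under eq_bigr do rewrite mxE expiz.
    rewrite expi_sum (bigD1 k) //= /phi eqxx.
    have -> : \sum_(j | j != k) (c j)%:~R * (s * (if j == k then - (c k)%:~R * Sg else th j))
        = s * Sg.
      transitivity (\sum_(j | j != k) s * ((c j)%:~R * th j)).
        by apply: eq_bigr => j /negbTE ->; rewrite mulrCA.
      by rewrite -mulr_sumr.
    have -> : (c k)%:~R * (s * (- (c k)%:~R * Sg)) = - ((c k)%:~R ^+ 2) * (s * Sg).
      by rewrite expr2; ring.
    by rewrite ck2 mulN1r addNr expi0.
  - move=> j; rewrite mxE.
    case: (eqVneq (z ord0 j) 0) => [->|zj]; first by rewrite !mulr0.
    have jk : j != k by apply/eqP => ejk; move: zj; rewrite ejk zk.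
    have tj1 : t ord0 j = 1 by apply: (mulIf zj); rewrite mul1r hfix.
    by rewrite /phi (negbTE jk) /th tj1 carg1 mulr0 expi0 mul1r.
have gam0 : gam 0 = one.
  by apply/matrixP => a j; rewrite !mxE mul0r expi0.
have gam1 : gam 1 = t.
  apply/matrixP => a j; rewrite ord1 !mxE mul1r.
  case: (eqVneq j k) => [->|jk]; last by rewrite /phi (negbTE jk) /th expi_carg.
  rewrite /phi eqxx.
  have hp : \prod_(j | j != k) t ord0 j ^ c j = expi Sg.
    rewrite /Sg -expi_sum; apply: eq_bigr => l _.
    by rewrite -{1}(expi_carg _ (tor l)) expiz.
  move: prod; rewrite (bigD1 k) //= -/c hp => prod.
  have htk : t ord0 k ^ c k = expi (- Sg).
    by rewrite expiN -[LHS]mulr1 -(mulfV (expi_neq0 Sg)) mulrA prod mul1r.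
  case: (hc k) htk => -> htk.
    by rewrite mulr1z mulN1r -htk expr1z.
  have -> : t ord0 k = (expi (- Sg))^-1 by rewrite -htk exprN1 invrK.
  by rewrite expiN invrK (_ : (-1)%:~R = -1 :> R) // opprK mul1r.
exists (gam @` `[0, 1]); split.
- apply: connected_continuous_connected.
    by apply/connected_intervalP; exact: interval_is_interval.
  apply: continuous_subspaceT; apply: continuous_rowfun => j.
  move=> x.
  have hm : {for x, continuous (fun y : R => y * phi j)}.
    by apply: cvgM; [exact: cvg_id | exact: cvg_cst].
  exact: (continuous_comp hm (expi_continuous _)).
- by move=> x [s _ <-]; exact: gamS.
- by exists 0; [rewrite /= in_itv /= lexx ler01 | exact: gam0].
- by exists 1; [rewrite /= in_itv /= lexx ler01 | exact: gam1].
Qed.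

Lemma cont_expn (K : numFieldType) l (x : K) : (fun y : K => y ^+ l) @ x --> x ^+ l.
Proof.
elim: l => [|l IH].
  have -> : (fun y : K => y ^+ 0) = (fun _ => 1) by apply/funext => y; rewrite expr0.
  by rewrite expr0; apply: cvg_cst; exact: nbhs_filter.
have -> : (fun y : K => y ^+ l.+1) = (fun y => y * y ^+ l).
  by apply/funext => y; rewrite exprS.
rewrite exprS.
exact: (@cvgM _ _ (nbhs x) _ (fun y => y) (fun y => y ^+ l) x (x ^+ l) cvg_id IH).
Qed.

Lemma cont_sumexp (K : numFieldType) k (x : K) :
  (fun y : K => \sum_(l < k) y ^+ l) @ x --> \sum_(l < k) x ^+ l.
Proof.
elim: k => [|k IH].
  have -> : (fun y : K => \sum_(l < 0) y ^+ l) = (fun _ => 0).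
    by apply/funext => y; rewrite big_ord0.
  by rewrite big_ord0; apply: cvg_cst; exact: nbhs_filter.
have -> : (fun y : K => \sum_(l < k.+1) y ^+ l) =
    (fun y => \sum_(l < k) y ^+ l + y ^+ k).
  by apply/funext => y; rewrite big_ord_recr.
rewrite big_ord_recr /=.
exact: (@cvgD _ _ _ (nbhs x) _ (fun y => \sum_(l < k) y ^+ l) (fun y => y ^+ k) _ _ IH (cont_expn _ _ _)).
Qed.

Lemma not_sa m (A : 'M[int]_(m.+1, m)) i :
  cvec A i != 0 -> cvec A i != 1 -> cvec A i != -1 -> ~ strictly_appropriate R A.
Proof.
move=> c0 c1 cN1 SA.
pose k := `|cvec A i|%N.
have k2 : (1 < k)%N.
  have k0 : k != 0%N by rewrite /k absz_eq0.
  have k1 : k != 1%N.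
    apply/negP => /eqP h.
    have : `|cvec A i| = 1 by rewrite -abszE -/k h.
    move/eqP; rewrite eqr_norml => /andP[/orP[] /eqP hh _].
      by move: c1; rewrite hh eqxx.
    by move: cN1; rewrite hh eqxx.
  by move: k0 k1; case: (k) => [|[|]].
have hc : cvec A i = k%:Z \/ cvec A i = - k%:Z.
  by rewrite /k; case: (cvec A i) => n; [left | right; rewrite NegzE].
have hk : forall x : R[i]^o, x ^ cvec A i = 1 <-> x ^+ k = 1.
  move=> x; case: hc => ->; first by rewrite -exprnP.
  split.
    by rewrite -invr_expz => /eqP; rewrite invr_eq1 => /eqP.
  by move=> h; rewrite -invr_expz -exprnP h invr1.
pose z : 'rV[R[i]^o]_m.+1 := \row_j (if j == i then 0 else 1).
pose psi (t : 'rV[R[i]^o]_m.+1) : R[i]^o :=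
  1 - (\sum_(l < k) (t ord0 i) ^+ l) / k%:R.
have kn0 : (k%:R : R[i]^o) != 0 by rewrite pnatr_eq0 -lt0n ltnW.
have hS : forall t, stabilizer A z t -> t ord0 i ^+ k = 1.
  move=> t [[tor prod] hfix]; apply/hk.
  move: prod; rewrite (bigD1 i) //= big1 ?mulr1 // => j ji.
  have := hfix j; rewrite mxE (negbTE ji) mulr1 => ->.
  exact: exp1rz.
have psi01 : forall t, stabilizer A z t -> psi t = 0 \/ psi t = 1.
  move=> t /hS tk; rewrite /psi.
  case: (eqVneq (t ord0 i) 1) => [->|t1].
    left; under eq_bigr do rewrite expr1n.
    by rewrite sumr_const card_ord divff // subrr.
  right; suff -> : \sum_(l < k) t ord0 i ^+ l = 0 by rewrite mul0r subr0.
  have := subrX1 (t ord0 i) k; rewrite tk subrr => /esym /eqP.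
  by rewrite mulf_eq0 subr_eq0 (negbTE t1) /= => /eqP.
pose one : 'rV[R[i]^o]_m.+1 := const_mx 1.
have Sone : stabilizer A z one.
  split; [split|].
  - by move=> j; rewrite mxE normr1.
  - by rewrite big1 // => j _; rewrite mxE exp1rz.
  - by move=> j; rewrite mxE mul1r.
have psione : psi one = 0.
  rewrite /psi mxE; under eq_bigr do rewrite expr1n.
  by rewrite sumr_const card_ord divff // subrr.
have [w hw] : exists w : R[i]^o, root (\poly_(l < k) (1 : R[i]^o)) w.
  apply/closed_rootP; rewrite size_poly_eq ?oner_neq0 //.
  by rewrite neq_ltn k2 orbT.
have wsum : \sum_(l < k) w ^+ l = 0.
  move: hw; rewrite /root horner_poly => /eqP h; rewrite -[RHS]h.
  by apply: eq_bigr => l _; rewrite mul1r.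
have wk : w ^+ k = 1.
  by apply/eqP; rewrite -subr_eq0 subrX1 wsum mulr0.
have nw : `|w| = 1.
  have : `|w| ^+ k = 1 by rewrite -normrX wk normr1.
  by move/eqP; rewrite pexpr_eq1 ?normr_ge0 ?(ltnW k2) // => /eqP.
pose ts : 'rV[R[i]^o]_m.+1 := \row_j (if j == i then w else 1).
have Sts : stabilizer A z ts.
  split; [split|].
  - by move=> j; rewrite mxE; case: (j == i) => //; rewrite normr1.
  - rewrite (bigD1 i) //= big1 ?mulr1.
      by rewrite mxE eqxx; apply/hk.
    by move=> j ji; rewrite mxE (negbTE ji) exp1rz.
  - by move=> j; rewrite !mxE; case: (j == i); rewrite ?mulr0 ?mul1r.
have psits : psi ts = 1.
  by rewrite /psi mxE eqxx wsum mul0r subr0.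
have pc : continuous psi.
  move=> t.
  have h1 : (fun s : 'rV[R[i]^o]_m.+1 => \sum_(l < k) s ord0 i ^+ l) @ t -->
      \sum_(l < k) t ord0 i ^+ l.
    exact: (continuous_comp (@coord_continuous _ _ _ ord0 i t) (cont_sumexp _ _ _)).
  have FFt : Filter (nbhs t) by exact: nbhs_filter.
  have h2 := cvgM h1 (cvg_cst ((k%:R : R[i]^o)^-1)).
  have h2' := h2 FFt FFt.
  have h3 := cvgB (cvg_cst (1 : R[i]^o)) h2'.
  rewrite /psi; exact: (h3 FFt FFt).
have cX := connected_continuous_connected (SA z) (continuous_subspaceT pc).
set X := psi @` stabilizer A z in cX.
have X0 : X 0 by exists one.
have X1 : X 1 by exists ts.
have h01 : forall x, X x -> x = 0 \/ x = 1 by move=> x [t St <-]; exact: psi01.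
have nb10 : ~ ball (1 : R[i]^o) 1 0.
  by rewrite /ball /= subr0 normr1 ltxx.
have nb01 : ~ ball (0 : R[i]^o) 1 1.
  by rewrite /ball /= sub0r normrN normr1 ltxx.
have hB : X `&` ball 0 1 = X.
  apply: cX.
  - by exists 0; split => //; apply: ballxx; exact: ltr01.
  - by exists (ball (0 : R[i]^o) (1 : R[i]^o)) => //; exact: ball_open.
  - exists (~` ball (1 : R[i]^o) (1 : R[i]^o)); first by apply: open_closedC; exact: ball_open.
    apply/seteqP; split => x [Xx bx]; split => //; case: (h01 x Xx) => hx; subst x.
    + exact: nb10.
    + by case: nb01.
    + by apply: ballxx; exact: ltr01.
    + by case: bx; apply: ballxx; exact: ltr01.
have : (X `&` ball 0 1) 1 by rewrite hB.
by case.
Qed.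
End Top.

Theorem lemma4p3 (R : realType) (m : nat) (A : 'M[int]_(m.+1, m))
  (Hgen : forall i : 'I_m.+1,
      row_free (map_mx (intr : int -> rat) (row' i A))) :
  (strictly_appropriate R A <-> forall i, cvec A i = 1 \/ cvec A i = -1) /\
  (strictly_appropriate R A <-> forall i j, `|ctilde A i| = `|ctilde A j|).
Proof.
have hpm := @pm1_iff m A Hgen.
have key : strictly_appropriate R A <-> forall i, cvec A i = 1 \/ cvec A i = -1.
  split; last exact: sa_of_pm1.
  move=> SA i.
  case: (eqVneq (cvec A i) 1) => [->|c1]; first by left.
  case: (eqVneq (cvec A i) (-1)) => [->|cN1]; first by right.
  exfalso; exact: (@not_sa R m A i (@cvec_neq0 m A Hgen i) c1 cN1 SA).
split => //; split.
  by move/key/hpm.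
by move/hpm/key.
Qed.
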